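(* Let $A$ be an infinite set, fix $z\in A$, $A'=A\setminus\{z\}$, and $p\in[1,\infty)$. Let $\alpha^n=a_1^na_2^n\ldots\in N(A)$ for $n\in\mathbb{N}^*$ and $x_n=p_p(\alpha^n)$. Suppose there are $n_0\in\mathbb{N}^*$, $n_0\ge 2$, and $a,b\in A$ with $a\neq b$ such that $\alpha=a_1a_2\ldots a_{n_0-1}abbb\ldots\in N(A)$ (i.e. the $n_0$-th letter is $a$ and all later letters are $b$), and let $x=p_p(\alpha)$. If $\lim_{n\to\infty}\|x_n-x\|_p=0$, then for every $m\in\mathbb{N}^*$ with $m>n_0+1$ there exists $l_m\in\mathbb{N}^*$ such that for every $l\ge l_m$ one of the following holds: (i) $a_i^l=a_i$ for $i=1,\ldots,n_0-1$, $a_{n_0}^l=a$, and $a_{n_0+1}^l=\cdots=a_m^l=b$; (ii) $a_i^l=a_i$ for $i=1,\ldots,n_0-1$, $a_{n_0}^l=b$, and $a_{n_0+1}^l=\cdots=a_m^l=a$.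
   Context: $l^p(A)$ is the set of families $x=(x_a)_{a\in A'}$ of real numbers with $x_a=0$ for all but countably many $a$ and $\sum_a|x_a|^p<\infty$, with norm $\|x\|_p=(\sum_a|x_a|^p)^{1/p}$. $N(A)$ is the set of all sequences $\alpha=a_1a_2a_3\ldots$ with $a_k\in A$. The map $p_p:N(A)\to l^p(A)$ is $p_p(\alpha)=(\alpha_c)_{c\in A'}$ where, for $\alpha=a_1a_2\ldots$, $\alpha_c=\sum_{k:\,a_k=c}2^{-k}$ (and $\alpha_c=0$ if no $a_k$ equals $c$). *)

(* Defs.v *)
From HB Require Import structures.
From mathcomp Require Import all_boot all_order all_algebra.
From mathcomp Require Import all_classical all_reals all_analysis.
Set Implicit Arguments. Unset Strict Implicit. Unset Printing Implicit Defensive.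
Import Order.TTheory GRing.Theory Num.Theory.
Local Open Scope classical_set_scope.
Local Open Scope ring_scope.

(* A word alpha = a_1 a_2 a_3 ... in N(A) is a function al : nat -> A with
   a_k = al k for k >= 1 (the value al 0 is ignored). *)

Definition word_coord (R : realType) (A : Type) (al : nat -> A) (c : A) : R :=
  fine (\esum_(k in [set k : nat | (1 <= k)%N /\ al k = c]) ((2%:R : R) ^- k)%:E)%E.

(* p_p(alpha) = (alpha_c)_{c in A'}, viewed as a function on A; only its
   values on A' = A \ {z} matter (the l^p norm below sums over A' only). *)
Definition pp_map (R : realType) (A : Type) (al : nat -> A) : A -> R :=
  fun c => word_coord R al c.

Definition Aprime (A : Type) (z : A) : set A := [set c | c <> z].

Definition lp_norm (R : realType) (A : choiceType) (z : A) (p : R) (x : A -> R)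
  : \bar R :=
  ((\esum_(c in Aprime z) (`|x c| `^ p)%:E) `^ (p^-1))%E.

(* Main.v *)
Require Import Defs.
From HB Require Import structures.
From mathcomp Require Import all_boot all_order all_algebra.
From mathcomp Require Import all_classical all_reals all_analysis.
From mathcomp Require Import ring lra zify.
Import Order.TTheory GRing.Theory Num.Theory.
Local Open Scope classical_set_scope.
Local Open Scope ring_scope.

Section Arith.
Set Implicit Arguments. Unset Strict Implicit.
Local Open Scope nat_scope.
Ltac arsolve HP Ha q :=
  let h := fresh in
  case: (ltngtP HP Ha) => h;
  [ have := leq_mul (h : HP.+1 <= Ha) (leqnn (2*q))
  | have := leq_mul (h : Ha.+1 <= HP) (leqnn (2*q))
  | subst HP ]; lia.
Lemma ar1 (HP Ha q RP : nat) (e : bool) :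
  2 <= q -> RP < q ->
  HP * (2*q) + (e * q + RP) <= Ha * (2*q) + q ->
  Ha * (2*q) + q <= HP * (2*q) + (e * q + RP) + 1 ->
  HP = Ha /\ ((e /\ RP = 0) \/ (~~ e /\ RP + 1 = q)).
Proof. case: e => /= *; arsolve HP Ha q. Qed.
Lemma ar2 (HP Ha q RP : nat) (e : bool) :
  2 <= q -> RP < q ->
  Ha * (2*q) + (q - 1) <= HP * (2*q) + (e * q + RP) ->
  HP * (2*q) + (e * q + RP) <= Ha * (2*q) + (q-1) + 1 ->
  HP = Ha /\ ((e /\ RP = 0) \/ (~~ e /\ RP + 1 = q)).
Proof. case: e => /= *; arsolve HP Ha q. Qed.
Lemma ar3 (HP Ha q RP : nat) (e : bool) :
  2 <= q -> RP < q ->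
  HP * (2*q) + (e * q + RP) <= Ha * (2*q) ->
  Ha * (2*q) <= HP * (2*q) + (e * q + RP) + 1 ->
  (HP = Ha /\ ~~ e /\ RP = 0) \/ (HP + 1 = Ha /\ e /\ RP + 1 = q).
Proof.
case: e => /= *; case: (ltngtP HP Ha) => h.
- have := leq_mul (h : HP.+1 <= Ha) (leqnn (2*q)).
  case: (ltngtP HP.+1 Ha) => h2.
  + have := leq_mul (h2 : HP.+2 <= Ha) (leqnn (2*q)); lia.
  + lia.
  + subst Ha; lia.
- have := leq_mul (h : Ha.+1 <= HP) (leqnn (2*q)); lia.
- subst HP; lia.
- have := leq_mul (h : HP.+1 <= Ha) (leqnn (2*q)).
  case: (ltngtP HP.+1 Ha) => h2.
  + have := leq_mul (h2 : HP.+2 <= Ha) (leqnn (2*q)); lia.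
  + lia.
  + subst Ha; lia.
- have := leq_mul (h : Ha.+1 <= HP) (leqnn (2*q)); lia.
- subst HP; lia.
Qed.
End Arith.

Fixpoint Nr {A : eqType} (be : nat -> A) (c : A) (n : nat) : nat :=
  match n with 0 => 0 | n'.+1 => 2 * Nr be c n' + (be n'.+1 == c) end.

Section Comb.
Set Implicit Arguments. Unset Strict Implicit.
Local Open Scope nat_scope.
Variable A : eqType.

Lemma Nr_lt (be : nat -> A) c n : Nr be c n < 2 ^ n.
Proof. elim: n => [|n IH] //=; rewrite expnS; case: (be n.+1 == c) => /=; lia. Qed.

Lemma Nr_split (be : nat -> A) c h j :
  Nr be c (h + j) = Nr be c h * 2 ^ j + Nr (fun k => be (h + k)) c j.
Proof.
elim: j => [|j IH]; first by rewrite addn0 expn0 muln1 addn0.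
rewrite addnS /= IH expnS mulnCA addnS; lia.
Qed.

Lemma Nr_full (be : nat -> A) c n :
  (Nr be c n).+1 = 2 ^ n -> forall k, 0 < k <= n -> be k = c.
Proof.
elim: n => [|n IH] /=; first by move=> _ k; lia.
have := Nr_lt be c n; rewrite expnS.
case E: (be n.+1 == c) => /= hl heq k hk.
  case: (ltngtP k n.+1) => hk2; first (apply: IH; lia); first lia.
  by subst k; apply/eqP.
lia.
Qed.

Lemma Nr_pos (be : nat -> A) c n k : 0 < k <= n -> be k = c -> 0 < Nr be c n.
Proof.
elim: n => [|n IH] /= hk hb; first lia.
case: (ltngtP k n.+1) => hk2; first (have := IH ltac:(lia) hb; lia); first lia.
by subst k; rewrite hb eqxx; lia.
Qed.

Lemma Nr_eq (P al : nat -> A) z h :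
  (forall c, c <> z -> Nr P c h = Nr al c h) -> forall k, 0 < k <= h -> P k = al k.
Proof.
elim: h => [|h IH] /= H k hk; first lia.
have H2 : forall c, c <> z -> Nr P c h = Nr al c h /\ (P h.+1 == c) = (al h.+1 == c).
  move=> c cz; have := H c cz.
  case: (P h.+1 == c); case: (al h.+1 == c) => /=; lia.
case: (ltngtP k h.+1) => hk2; first (apply: IH; [by move=> c /H2 [] | lia]); first lia.
subst k.
case: (eqVneq (P h.+1) z) => hP.
  case: (eqVneq (al h.+1) z) => ha; first by rewrite hP ha.
  have [_ e] := H2 _ (elimN eqP ha); move: e; rewrite eqxx => /eqP //.
have [_ e] := H2 _ (elimN eqP hP); move: e; rewrite eqxx => /esym /eqP -> //.
Qed.

Lemma Nr_ab (s : nat -> A) a b c j : s 1 = a -> (forall k, 1 < k -> s k = b) ->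
  Nr s c j.+1 = (a == c) * 2 ^ j + (b == c) * (2 ^ j - 1).
Proof.
move=> s1 sk; elim: j => [|j IH].
  rewrite /= s1 expn0 subnn; lia.
change (Nr s c j.+2) with (2 * Nr s c j.+1 + (s j.+2 == c)).
rewrite IH sk // expnS.
have : 0 < 2 ^ j by rewrite expn_gt0.
case: (a == c); case: (b == c) => /=; lia.
Qed.
End Comb.

Section C.
Set Implicit Arguments. Unset Strict Implicit.
Local Open Scope nat_scope.
Variable A : eqType.

Lemma comb (z a b : A) (al P : nat -> A) (h j : nat) :
  a <> b -> 2 <= j -> al h.+1 = a -> (forall k, h.+1 < k -> al k = b) ->
  (forall c, c <> z -> Nr P c (h + j.+1) <= Nr al c (h + j.+1) + (c == b) /\
                       Nr al c (h + j.+1) + (c == b) <= Nr P c (h + j.+1) + 1) ->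
  (forall i, 0 < i <= h -> P i = al i) /\
  ((P h.+1 = a /\ forall i, h.+1 < i <= h + j.+1 -> P i = b) \/
   (P h.+1 = b /\ forall i, h.+1 < i <= h + j.+1 -> P i = a)).
Proof.
move=> ab j2 aln0 alb H.
set q := 2 ^ j.
have q4 : 4 <= q by rewrite /q (_ : 4 = 2 ^ 2) // leq_pexp2l.
set r := fun k => P (h + (1 + k)).
have decP : forall c, Nr P c (h + j.+1) =
    Nr P c h * (2 * q) + ((P h.+1 == c) * q + Nr r c j).
  move=> c; rewrite (Nr_split P c h j.+1) (Nr_split _ c 1 j) /= addn1 expnS.
  by [].
have decA : forall c, Nr al c (h + j.+1) =
    Nr al c h * (2 * q) + ((a == c) * q + (b == c) * (q - 1)).
  move=> c; rewrite (Nr_split al c h j.+1) expnS (@Nr_ab _ _ a b) //.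
    by rewrite addn1.
  by move=> k hk; apply: alb; lia.
have RPlt : forall c, Nr r c j < q by move=> c; apply: Nr_lt.
have Fa : a <> z -> Nr P a h = Nr al a h /\
    ((P h.+1 = a /\ Nr r a j = 0) \/ (P h.+1 <> a /\ (Nr r a j).+1 = q)).
  move=> az; have [H1 H2] := H a az.
  move: H1 H2; rewrite !decP !decA eqxx.
  have -> : (b == a) = false by apply/eqP => e; apply: ab.
  have -> : (a == b) = false by apply/eqP.
  move=> H1 H2; rewrite /= ?mul1n ?mul0n ?addn0 ?add0n in H1 H2.
  have := @ar1 (Nr P a h) (Nr al a h) q (Nr r a j) (P h.+1 == a) ltac:(lia) (RPlt a)
     ltac:(lia) ltac:(lia).
  case: eqP => [e|ne] /= [-> hh]; split => //.
    by left; split => //; case: hh => [[_ ->]|[]].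
  by right; split => //; case: hh => [[]|[_ ?]] //; lia.
have Fb : b <> z -> Nr P b h = Nr al b h /\
    ((P h.+1 = b /\ Nr r b j = 0) \/ (P h.+1 <> b /\ (Nr r b j).+1 = q)).
  move=> bz; have [H1 H2] := H b bz.
  move: H1 H2; rewrite !decP !decA eqxx.
  have -> : (a == b) = false by apply/eqP.
  move=> H1 H2; rewrite /= ?mul1n ?mul0n ?addn0 ?add0n in H1 H2.
  have := @ar2 (Nr P b h) (Nr al b h) q (Nr r b j) (P h.+1 == b) ltac:(lia) (RPlt b)
     ltac:(lia) ltac:(lia).
  case: eqP => [e|ne] /= [-> hh]; split => //.
    by left; split => //; case: hh => [[_ ->]|[]].
  by right; split => //; case: hh => [[]|[_ ?]] //; lia.
have Fc : forall c, c <> z -> c <> a -> c <> b ->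
    (Nr P c h = Nr al c h /\ P h.+1 <> c /\ Nr r c j = 0) \/
    (P h.+1 = c /\ (Nr r c j).+1 = q).
  move=> c cz ca cb; have [H1 H2] := H c cz.
  move: H1 H2; rewrite !decP !decA.
  have -> : (a == c) = false by apply/eqP => e; apply: ca.
  have -> : (b == c) = false by apply/eqP => e; apply: cb.
  have -> : (c == b) = false by apply/eqP.
  move=> H1 H2; rewrite /= ?mul1n ?mul0n ?addn0 ?add0n in H1 H2.
  have := @ar3 (Nr P c h) (Nr al c h) q (Nr r c j) (P h.+1 == c) ltac:(lia) (RPlt c)
     ltac:(lia) ltac:(lia).
  case: eqP => [e|ne] /= [[h1 [h2 h3]]|[h1 [h2 h3]]] //.
    by right; split => //; lia.
  by left.
have full : forall c, (Nr r c j).+1 = q -> forall k, 0 < k <= j -> r k = c.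
  by move=> c hc; apply: Nr_full.
have zero : forall c, Nr r c j = 0 -> forall k, 0 < k <= j -> r k <> c.
  by move=> c hc k hk e; have := Nr_pos hk e; lia.
have noDef : forall c, c <> z -> c <> a -> c <> b ->
    Nr P c h = Nr al c h /\ P h.+1 <> c /\ Nr r c j = 0.
  move=> c cz ca cb; case: (Fc c cz ca cb) => // [[e1 e2]].
  have r1 := full c e2 1 ltac:(lia).
  case: (eqVneq a z) => [az|/eqP az].
    have bz : b <> z by move=> e; apply: ab; rewrite az e.
    case: (Fb bz) => _ [[? _]|[_ e3]]; first by exfalso; apply: cb; congruence.
    by have := full b e3 1 ltac:(lia); rewrite r1 => e; exfalso; apply: cb.
  case: (Fa az) => _ [[? _]|[_ e3]]; first by exfalso; apply: ca; congruence.
  by have := full a e3 1 ltac:(lia); rewrite r1 => e; exfalso; apply: ca.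
have pos : forall x, (forall k, 0 < k <= j -> r k = x) ->
    forall i, h.+1 < i <= h + j.+1 -> P i = x.
  move=> x hx i hi; have := hx (i - h.+1) ltac:(lia); rewrite /r.
  by have -> : h + (1 + (i - h.+1)) = i by lia.
split.
  apply: (@Nr_eq _ P al z h) => c cz.
  case: (eqVneq c a) => [e|/eqP ca]; first by subst c; case: (Fa cz).
  case: (eqVneq c b) => [e|/eqP cb]; first by subst c; case: (Fb cz).
  by case: (noDef c cz ca cb).
case: (eqVneq a z) => [az|/eqP az].
  have bz : b <> z by move=> e; apply: ab; rewrite az e.
  case: (Fb bz) => _ [[e1 e2]|[e1 e2]].
    right; split => //; apply: pos => k hk.
    case: (eqVneq (r k) z) => [->|/eqP rz] //.
    case: (eqVneq (r k) b) => [rb|/eqP rb]; first by exfalso; apply: (zero b e2 k hk).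
    have ra : r k <> a by rewrite az.
    by case: (noDef _ rz ra rb) => _ [_ e3]; exfalso; apply: (zero _ e3 k hk).
  left; split; last by apply: pos; apply: full.
  case: (eqVneq (P h.+1) z) => [->|/eqP pz] //.
  case: (eqVneq (P h.+1) b) => [//|/eqP pb].
  have pa : P h.+1 <> a by rewrite az.
  by case: (noDef _ pz pa pb) => _ [].
case: (Fa az) => _ [[e1 e2]|[e1 e2]].
  left; split => //; apply: pos => k hk.
  case: (eqVneq (r k) b) => [//|/eqP rb].
  case: (eqVneq (r k) a) => [ra|/eqP ra]; first by exfalso; apply: (zero a e2 k hk).
  case: (eqVneq (r k) z) => [rz|/eqP rz].
    case: (eqVneq b z) => [bz|/eqP bz]; first by rewrite rz bz.
    case: (Fb bz) => _ [[e3 _]|[_ e3]]; first by exfalso; apply: ab; congruence.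
    by have := full b e3 k hk; rewrite rz => e; exfalso; apply: bz.
  by case: (noDef _ rz ra rb) => _ [_ e3]; exfalso; apply: (zero _ e3 k hk).
right; split; last by apply: pos; apply: full.
case: (eqVneq (P h.+1) b) => [//|/eqP pb].
case: (eqVneq (P h.+1) z) => [pz|/eqP pz].
  case: (eqVneq b z) => [bz|/eqP bz]; first by rewrite pz bz.
  case: (Fb bz) => _ [[e3 _]|[_ e3]] //.
  have := full b e3 1 ltac:(lia); rewrite (full a e2 1 ltac:(lia)) => e.
  by exfalso; apply: ab.
by case: (noDef _ pz e1 pb) => _ [].
Qed.
End C.

Section R.
Set Implicit Arguments. Unset Strict Implicit.
Variable R : realType.
Notation w k := ((2%:R : R) ^- k).

Lemma w_ge0 k : 0 <= w k.
Proof. by rewrite invr_ge0 exprn_ge0. Qed.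

Lemma partial_Nr (A : eqType) (be : nat -> A) c n :
  \sum_(0 <= k < n.+1 | (1 <= k)%N && (be k == c)) w k = (Nr be c n)%:R / 2%:R ^+ n.
Proof.
elim: n => [|n IH].
  by rewrite big_mkcond big_nat1 /= mul0r.
rewrite big_mkcond big_nat_recr //= -big_mkcond IH /=.
have h2 : (2%:R : R) ^+ n.+1 != 0 by rewrite expf_neq0 // pnatr_eq0.
have h2' : (2%:R : R) ^+ n != 0 by rewrite expf_neq0 // pnatr_eq0.
case: (be n.+1 == c) => /=.
  by rewrite natrD natrM /= exprS; field; exact: h2'.
by rewrite addn0 addr0 natrM exprS; field; exact: h2'.
Qed.

Lemma geom_tail M j :
  \sum_(M.+1 <= k < M.+1 + j) w k = w M - w (M + j).
Proof.
elim: j => [|j IH].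
  by rewrite !addn0 big_geq // subrr.
rewrite addnS big_nat_recr /=; last by rewrite leq_addr.
rewrite IH addnS.
have h : w (M + j) = 2%:R * w (M + j).+1.
  rewrite exprS invfM mulrA mulfV ?mul1r // pnatr_eq0 //.
rewrite h; ring.
Qed.

Lemma tail_le (P : pred nat) M n :
  \sum_(M.+1 <= k < n | P k) w k <= w M.
Proof.
apply: (@le_trans _ _ (\sum_(M.+1 <= k < n) w k)).
  rewrite big_mkcond /=; apply: ler_sum => k _.
  by case: (P k) => //; apply: w_ge0.
case: (leqP n M.+1) => hn.
  by rewrite big_geq // w_ge0.
have -> : n = (M.+1 + (n - M.+1))%N by rewrite subnKC // ltnW.
rewrite geom_tail lerBlDr lerDl; exact: w_ge0.
Qed.

Lemma wc_bounds (A : choiceType) (be : nat -> A) c M e :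
  (forall n, \sum_(M.+1 <= k < n | (1 <= k)%N && (be k == c)) w k <= e) ->
  (Nr be c M)%:R / 2%:R ^+ M <= word_coord R be c <= (Nr be c M)%:R / 2%:R ^+ M + e.
Proof.
move=> He.
set P := fun k => (1 <= k)%N && (be k == c).
have hS : [set k : nat | (1 <= k)%N /\ be k = c] = [set x | P x].
  apply/seteqP; split => k /=; rewrite /P.
    by move=> [-> ->]; rewrite eqxx.
  by move=> /andP[-> /eqP ->].
rewrite /word_coord hS -nneseries_esum; last by move=> n _; rewrite lee_fin w_ge0.
set x := (\sum_(i <oo | P i) _)%E.
have lo : (((Nr be c M)%:R / 2%:R ^+ M)%:E <= x)%E.
  rewrite -partial_Nr -sumEFin.
  exact: (@nneseries_lim_ge R (fun k => (w k)%:E) P 0 M.+1) => k _ _; rewrite lee_fin w_ge0.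
have part : forall n, \sum_(0 <= k < n | P k) w k <= (Nr be c M)%:R / 2%:R ^+ M + e.
  move=> n.
  apply: (@le_trans _ _ (\sum_(0 <= k < maxn n M.+1 | P k) w k)).
    rewrite (@big_cat_nat _ _ _ n 0 (maxn n M.+1)) //=; last by rewrite leq_maxl.
    rewrite lerDl; apply: sumr_ge0 => k _; exact: w_ge0.
  rewrite (@big_cat_nat _ _ _ M.+1 0 (maxn n M.+1)) //=; last by rewrite leq_maxr.
  by rewrite partial_Nr lerD2l.
have hi : (x <= ((Nr be c M)%:R / 2%:R ^+ M + e)%:E)%E.
  apply: lime_le.
    by apply: is_cvg_nneseries_cond => k _ _; rewrite lee_fin w_ge0.
  by apply: nearW => n; rewrite sumEFin lee_fin.
have x0 : (0 <= x)%E.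
  apply: le_trans lo; rewrite lee_fin divr_ge0 // exprn_ge0 //.
have xf : x \is a fin_num.
  by rewrite ge0_fin_numE //; apply: le_lt_trans hi _; rewrite ltry.
by rewrite -!lee_fin fineK // lo hi.
Qed.

Lemma key (A : choiceType) (P al : nat -> A) b c m :
  (forall k, (m < k)%N -> al k = b) ->
  `|word_coord R P c - word_coord R al c| < w m.+1 ->
  (Nr P c m <= Nr al c m + (c == b))%N /\ (Nr al c m + (c == b) <= Nr P c m + 1)%N.
Proof.
move=> alb hd.
set T : R := 2%:R ^+ m.
have T0 : 0 < T by rewrite exprn_gt0.
have wm : w m = T^-1 by [].
have wm1 : w m.+1 = (T * 2%:R)^-1 by rewrite /T exprSr.
have /andP[P1 P2] := @wc_bounds A P c m (w m) (fun n => tail_le _ m n).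
have tl2 : forall n, \sum_(m.+1 <= k < n | (1 <= k)%N && (al k == c)) w k <= (c == b)%:R * w m.
  move=> n; case: (eqVneq c b) => [cb|cb]; first by rewrite mul1r; apply: tail_le.
  rewrite mul0r big_nat_cond big1 // => k /andP[/andP[hk _] /andP[_ /eqP e]].
  by exfalso; move: cb; rewrite -e alb ?eqxx.
have /andP[_ A2] := @wc_bounds A al c m ((c == b)%:R * w m) tl2.
have /andP[A1 _] := @wc_bounds A al c m.+2 (w m.+2) (fun n => tail_le _ m.+2 n).
have NA : Nr al c m.+2 = (4 * Nr al c m + 3 * (c == b))%N.
  by rewrite /= !alb // (eq_sym b c); lia.
rewrite NA in A1.
set xP := word_coord R P c in P1 P2 hd.
set xa := word_coord R al c in A1 A2 hd.
have Tn : T != 0 by rewrite gt_eqF.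
rewrite -/T -(ler_pM2r T0) divfK // in P1.
rewrite -/T -(ler_pM2r T0) mulrDl divfK // mulVf // in P2.
rewrite -/T -(ler_pM2r T0) mulrDl !divfK // in A2.
have T4 : (2%:R : R) ^+ m.+2 = T * 4%:R by rewrite !exprSr /T -mulrA; congr (_ * _); rewrite -natrM.
rewrite T4 -(ler_pM2r (_ : 0 < T * 4%:R)) ?mulr_gt0 // divfK ?mulf_neq0 // in A1.
rewrite wm1 -(ltr_pM2r T0) invfM mulrAC mulVf // mul1r -{1}(ger0_norm (ltW T0)) -normrM in hd.
rewrite mulrBl in hd.
set yP := xP * T in P1 P2 hd.
set ya := xa * T in A2 hd.
have A1' : (4 * Nr al c m + 3 * (c == b))%:R <= 4%:R * ya.
  by rewrite /ya (mulrC 4%:R) -mulrA.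

have [hd1 hd2] : yP - ya < 2^-1 /\ ya - yP < 2^-1.
  by move: hd; rewrite ltr_norml => /andP[h1 h2]; split; lra.
rewrite !natrD in A1'.
split.
  have : ((Nr P c m)%:R : R) < (Nr al c m + (c == b) + 1)%:R by rewrite !natrD; lra.
  by rewrite ltr_nat; lia.
have k1 : ((c == b)%:R : R) <= 1 by case: (c == b); rewrite ?ler01.
have : ((Nr al c m + (c == b))%:R : R) < (Nr P c m + 2)%:R by rewrite !natrD; lra.
by rewrite ltr_nat; lia.
Qed.
End R.
Lemma lp_coord (R : realType) (A : choiceType) (z : A) (p : R) (d : A -> R) (e : R) c :
  1 <= p -> c <> z -> (lp_norm z p d < e%:E)%E -> `|d c| < e.
Proof.
move=> p1 cz H.
have p0 : 0 < p by apply: lt_le_trans p1.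
set S := (\esum_(c in Aprime z) (`|d c| `^ p)%:E)%E.
have S0 : (0 <= S)%E by apply: esum_ge0 => i _; rewrite lee_fin powR_ge0.
have cS : ((`|d c| `^ p)%:E <= S)%E.
  apply: esum_ge; exists [set c]; first by split => // x ->.
  by rewrite fsbig_set1.
have pi0 : 0 <= p^-1 by rewrite invr_ge0 ltW.
have := @gt0_ler_poweR R p^-1 pi0.
move=> /(_ ((`|d c| `^ p)%:E) S) h.
have {h} := h _ _ cS.
rewrite !in_itv /= leey S0 lee_fin powR_ge0 leey => /(_ isT isT).
rewrite -powRrM mulfV ?gt_eqF // powRr1 // => h.
by rewrite -lte_fin; apply: le_lt_trans h H.
Qed.

Lemma ev_lt (R : realType) (f : nat -> \bar R) (e : R) :
  (f n @[n --> \oo] --> 0%E) -> 0 < e -> exists N, forall n, (N <= n)%N -> (f n < e%:E)%E.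
Proof.
move=> H e0.
have := H _ (open_ereal_lt' (_ : (0%E < e%:E)%E)).
rewrite lte_fin => /(_ e0) [N _ HN].
by exists N => n Nn; apply: HN.
Qed.

Theorem proposition3p4 (R : realType) (A : choiceType) (z : A) (p : R)
  (alphas : nat -> nat -> A) (n0 : nat) (a b : A) (alpha : nat -> A) :
  infinite_set [set: A] ->
  1 <= p ->
  (2 <= n0)%N ->
  a <> b ->
  alpha n0 = a ->
  (forall k, (n0 < k)%N -> alpha k = b) ->
  (lp_norm z p (fun c => pp_map R (alphas n) c - pp_map R alpha c))
     @[n --> \oo] --> 0%E ->
  forall m : nat, (n0.+1 < m)%N ->
  exists lm : nat, (1 <= lm)%N /\
    forall l : nat, (lm <= l)%N ->
      ((forall i, (1 <= i <= n0.-1)%N -> alphas l i = alpha i) /\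
       alphas l n0 = a /\
       (forall i, (n0.+1 <= i <= m)%N -> alphas l i = b))
      \/
      ((forall i, (1 <= i <= n0.-1)%N -> alphas l i = alpha i) /\
       alphas l n0 = b /\
       (forall i, (n0.+1 <= i <= m)%N -> alphas l i = a)).
Proof.
Proof.
move=> _ p1 n02 ab an0 atl Hcv m hm.
have e0 : 0 < (2%:R : R) ^- m.+1 by rewrite invr_gt0 exprn_gt0.
have [N HN] := ev_lt Hcv e0.
exists (maxn N 1); split; first by rewrite leq_maxr.
move=> l hl.
have hd : forall c, c <> z ->
    (Nr (alphas l) c m <= Nr alpha c m + (c == b))%N /\
    (Nr alpha c m + (c == b) <= Nr (alphas l) c m + 1)%N.
  move=> c cz; apply: key.
    by move=> k hk; apply: atl; lia.
  exact: (@lp_coord R A z p _ _ c p1 cz (HN l ltac:(lia))).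
case: n0 n02 an0 atl hm hd => [//|h] n02 an0 atl hm hd.
have [j ej] : exists j, m = (h + j.+1)%N by exists (m - h.+1)%N; lia.
subst m.
have := (@comb A z a b alpha (alphas l) h j ab ltac:(lia) an0 atl hd).
by move=> [H1 [H2|H2]]; [left|right]; split.
Qed.
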